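(* Let $n, l_z, l_c \ge 1$ be integers, let $\alpha>0$ and $\beta_d>0$ be constants, and let the following signals be defined on $[0,\infty)$: $e:[0,\infty)\to\mathbb{R}^n$ continuously differentiable; $\delta_3:[0,\infty)\to\mathbb{R}^n$ and $D:[0,\infty)\to\mathbb{R}^n$ twice continuously differentiable; for $j=1,\dots,l_z$, $\tilde z_j:[0,\infty)\to\mathbb{R}$ and $w_j:[0,\infty)\to\mathbb{R}^n$ continuously differentiable, and $\Lambda_j:[0,\infty)\to\mathbb{R}^{l_c}$, $v:[0,\infty)\to\mathbb{R}^{l_c}$, $\tilde w_j:[0,\infty)\to\mathbb{R}^n$ continuous. Define $s(t)\triangleq \dot e(t)+\alpha e(t)$, $$M_1(t)\triangleq\sum_{j=1}^{l_z}\tilde z_j(t)\,w_j(t),\qquad M_2(t)\triangleq\sum_{j=1}^{l_z}\big(\Lambda_j(t)^T v(t)\big)\,\tilde w_j(t).$$ Assume there are positive constants $\dot{\bar\delta}_3,\ddot{\bar\delta}_3,c_{d_1},c_{d_2},c_{M_1},c_{\dot M_1},c_{M_2}$ such that for all $t\ge0$: $\|\dot\delta_3(t)\|_1<\dot{\bar\delta}_3$, $\|\ddot\delta_3(t)\|_1<\ddot{\bar\delta}_3$, $\|\dot D(t)\|\le c_{d_1}$, $\|\ddot D(t)\|\le c_{d_2}$, $\|M_1(t)\|_1<c_{M_1}$, $\|\dot M_1(t)\|_1<c_{\dot M_1}$, $\|M_2(t)\|_1<c_{M_2}$. Define the scalar signal $\Omega$ by $$\Omega(t)=\Omega(0)+\int_0^t\Big[-s(\tau)^T\big(\dot\delta_3(\tau)+\dot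 D(\tau)-\beta_d\,\mathrm{sgn}(e(\tau))\big)-M_1(\tau)^T\dot e(\tau)-M_2(\tau)^Te(\tau)\Big]d\tau,$$ with $$\Omega(0)=\beta_d\|e(0)\|_1-e(0)^T\big(\dot\delta_3(0)+\dot D(0)+M_1(0)\big).$$ If $$\beta_d\ \ge\ \dot{\bar\delta}_3+c_{d_1}+c_{M_1}+\frac{1}{\alpha}\big(\ddot{\bar\delta}_3+c_{d_2}+c_{\dot M_1}+c_{M_2}\big),$$ then $\Omega(t)\ge0$ for all $t\ge0$.
   Context: $\|\cdot\|$ denotes the Euclidean norm and $\|\cdot\|_1$ the $\ell_1$ norm on $\mathbb{R}^n$; $\mathrm{sgn}(\cdot)$ is the standard sign function applied componentwise (with $\mathrm{sgn}(0)=0$). In the paper's application, $e$ is a filtered tracking error, $\delta_3$ is the estimation error of a steady-state control term, $D(t)=g^{-1}(\bar x(t))d(t)$ is the input-transformed disturbance, $\tilde z_j$ and $\tilde w_j$ are parameter estimation errors of an adaptor network, and $v$ are critic weights; for the lemma only the stated regularity and bounds are used. *)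

(* Defs.v *)
From Stdlib Require Import Reals Lra.
From Coquelicot Require Import Coquelicot.
Open Scope R_scope.

(* Vectors in R^k are represented as functions nat -> R; only indices i < k matter. *)

Fixpoint sumR (k : nat) (f : nat -> R) : R :=
  match k with
  | O => 0
  | S m => sumR m f + f m
  end.

Definition dotR (k : nat) (x y : nat -> R) : R := sumR k (fun i => x i * y i).
Definition norm2 (k : nat) (x : nat -> R) : R := sqrt (dotR k x x).
Definition norm1 (k : nat) (x : nat -> R) : R := sumR k (fun i => Rabs (x i)).

Definition sgn (x : R) : R :=
  if Rlt_dec 0 x then 1 else if Rlt_dec x 0 then -1 else 0.

Definition cont_on0 (f : R -> R) : Prop :=
  forall t, 0 <= t ->
    filterlim f (within (fun s => 0 <= s) (locally t)) (locally (f t)).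

Definition deriv_on0 (f f' : R -> R) : Prop :=
  forall t, 0 <= t ->
    filterlim (fun h => (f (t + h) - f t) / h)
      (within (fun h => h <> 0 /\ 0 <= t + h) (locally 0)) (locally (f' t)).

Definition C1_on0 (f f' : R -> R) : Prop := deriv_on0 f f' /\ cont_on0 f'.

Definition vcont_on0 (k : nat) (f : R -> nat -> R) : Prop :=
  forall i, (i < k)%nat -> cont_on0 (fun t => f t i).
Definition vC1_on0 (k : nat) (f f' : R -> nat -> R) : Prop :=
  forall i, (i < k)%nat -> C1_on0 (fun t => f t i) (fun t => f' t i).

(* Main.v *)
Require Import Defs.
From Stdlib Require Import Reals Lra Lia Classical.
From Coquelicot Require Import Coquelicot.
Open Scope R_scope.

Lemma ballR (x : R) (e : posreal) y : ball x e y <-> Rabs (y - x) < e.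
Proof. split; intro H; exact H. Qed.

Definition Ft (t : R) := within (fun x : R => 0 <= x) (locally t).
Global Instance Ft_filter t : Filter (Ft t).
Proof. apply within_filter, locally_filter. Qed.

Definition cnt (f : R -> R) t := forall eps, 0 < eps -> Ft t (fun x => Rabs (f x - f t) < eps).
Definition dif (f : R -> R) (d : R) t :=
  forall eps, 0 < eps -> Ft t (fun x => Rabs (f x - f t - d * (x - t)) <= eps * Rabs (x - t)).

Lemma Ft_near t eta : 0 < eta -> Ft t (fun x => Rabs (x - t) < eta).
Proof. intros H. exists (mkposreal eta H). intros y Hy _. exact Hy. Qed.

Lemma Ft_right t P : 0 <= t -> Ft t P -> at_right t P.
Proof. intros Ht [eps He]. exists eps. intros y Hy Hty. apply He; auto; lra. Qed.

Lemma Ft_left t P : 0 < t -> Ft t P -> at_left t (fun x => 0 <= x /\ P x).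
Proof. intros Ht [eps He]. exists (mkposreal _ (Rmin_pos _ _ Ht (cond_pos eps))).
  intros y Hy Hty. assert (Hy' : Rabs (y - t) < Rmin t eps) by exact Hy. clear Hy. rename Hy' into Hy.
  assert (Hm1 := Rmin_l t eps). assert (Hm2 := Rmin_r t eps).
  apply Rabs_def2 in Hy.
  assert (0 <= y) by lra. split; auto. apply He; [|auto]. apply ballR. apply Rabs_def1; lra. Qed.

Lemma at_right_gt t : at_right t (fun x => t < x).
Proof. exists (mkposreal 1 Rlt_0_1). intros; auto. Qed.

Lemma cnt_of_cont f t : cont_on0 f -> 0 <= t -> cnt f t.
Proof. intros H Ht eps He. specialize (H t Ht). apply filterlim_locally with (eps := mkposreal eps He) in H.
  eapply filter_imp; [|exact H]. intros x Hx. apply ballR in Hx. exact Hx. Qed.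

Lemma dif_of_deriv f f' t : deriv_on0 f f' -> 0 <= t -> dif f (f' t) t.
Proof. intros H Ht eps He. specialize (H t Ht). apply filterlim_locally with (eps := mkposreal eps He) in H.
  destruct H as [d Hd]. exists d. intros x Hx Hx0.
  destruct (Req_dec x t) as [->|Hne].
  - replace (t - t) with 0 by ring. rewrite Rabs_R0. replace (f t - f t - f' t * 0) with 0 by ring.
    rewrite Rabs_R0. lra.
  - assert (Hb : ball 0 d (x - t)). { apply ballR. apply ballR in Hx. now replace (x - t - 0) with (x - t) by ring. }
    specialize (Hd (x - t) Hb). assert (Hxt : x - t <> 0) by lra.
    assert (Htx : 0 <= t + (x - t)) by lra.
    specialize (Hd (conj Hxt Htx)). apply ballR in Hd. simpl in Hd.
    assert (Ex : (t + (x - t) = x)%R) by (simpl; ring). rewrite Ex in Hd.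
    replace (f x - f t - f' t * (x - t)) with ((x - t) * ((f x - f t) / (x - t) - f' t)) by (field; auto).
    rewrite Rabs_mult. rewrite Rmult_comm. apply Rmult_le_compat_r; [apply Rabs_pos|].
    assert (Rabs ((f x - f t) / (x - t) - f' t) < eps) by exact Hd. lra. Qed.

Lemma dif_cnt f d t : dif f d t -> cnt f t.
Proof. intros H eps He.
  assert (Hp : 0 < 1 + Rabs d) by (pose proof (Rabs_pos d); lra).
  eapply filter_imp; [|apply filter_and; [apply (H 1 Rlt_0_1)|apply (Ft_near t (eps / (1 + Rabs d)))]].
  2: apply Rdiv_lt_0_compat; lra.
  intros x [H1 H2]. 
  assert (Rabs (f x - f t) <= Rabs (f x - f t - d * (x - t)) + Rabs (d * (x - t))).
  { replace (f x - f t) with ((f x - f t - d * (x - t)) + d * (x - t)) at 1 by ring. apply Rabs_triang. }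
  rewrite Rabs_mult in H0.
  assert (Rabs (x - t) * (1 + Rabs d) < eps).
  { apply (Rmult_lt_compat_r (1+Rabs d)) in H2; [|lra].
    replace (eps / (1 + Rabs d) * (1 + Rabs d)) with eps in H2 by (field; lra). exact H2. }
  pose proof (Rabs_pos (x - t)). pose proof (Rabs_pos d). nra. Qed.

Lemma cnt_const c t : cnt (fun _ => c) t.
Proof. intros eps He. apply filter_forall. intros x. replace (c - c) with 0 by ring. rewrite Rabs_R0. lra. Qed.

Lemma cnt_plus f g t : cnt f t -> cnt g t -> cnt (fun x => f x + g x) t.
Proof. intros Hf Hg eps He. eapply filter_imp; [|apply filter_and; [apply (Hf (eps/2))|apply (Hg (eps/2))]]; try lra.
  intros x [H1 H2]. replace (f x + g x - (f t + g t)) with ((f x - f t) + (g x - g t)) by ring.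
  eapply Rle_lt_trans; [apply Rabs_triang|lra]. Qed.

Lemma cnt_opp f t : cnt f t -> cnt (fun x => - f x) t.
Proof. intros Hf eps He. eapply filter_imp; [|apply (Hf eps He)]. intros x H.
  replace (- f x - - f t) with (- (f x - f t)) by ring. now rewrite Rabs_Ropp. Qed.

Lemma cnt_minus f g t : cnt f t -> cnt g t -> cnt (fun x => f x - g x) t.
Proof. intros. apply (cnt_plus f (fun x => - g x)); auto. now apply cnt_opp. Qed.

Lemma cnt_abs f t : cnt f t -> cnt (fun x => Rabs (f x)) t.
Proof. intros Hf eps He. eapply filter_imp; [|apply (Hf eps He)]. intros x H.
  eapply Rle_lt_trans; [apply Rabs_triang_inv2|exact H]. Qed.

Lemma cnt_mult f g t : cnt f t -> cnt g t -> cnt (fun x => f x * g x) t.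
Proof. intros Hf Hg eps He.
  set (A := Rabs (f t)). set (B := Rabs (g t) + 1).
  assert (HA : 0 <= A) by apply Rabs_pos. assert (HB : 1 <= B) by (pose proof (Rabs_pos (g t)); unfold B; lra).
  set (e1 := eps / (2 * B)). set (e2 := Rmin 1 (eps / (2 * (A + 1)))).
  assert (He1 : 0 < e1) by (unfold e1; apply Rdiv_lt_0_compat; lra).
  assert (He2 : 0 < e2) by (unfold e2; apply Rmin_pos; [lra|apply Rdiv_lt_0_compat; lra]).
  eapply filter_imp; [|apply filter_and; [apply (Hf e1 He1)|apply (Hg e2 He2)]].
  intros x [H1 H2].
  replace (f x * g x - f t * g t) with ((f x - f t) * g x + f t * (g x - g t)) by ring.
  eapply Rle_lt_trans; [apply Rabs_triang|]. rewrite !Rabs_mult.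
  assert (Hgx : Rabs (g x) <= B).
  { unfold B. assert (Rabs (g x) <= Rabs (g x - g t) + Rabs (g t)).
    { replace (g x) with ((g x - g t) + g t) at 1 by ring. apply Rabs_triang. }
    assert (e2 <= 1) by apply Rmin_l. lra. }
  assert (E1 : Rabs (f x - f t) * Rabs (g x) <= e1 * B).
  { apply Rmult_le_compat; try apply Rabs_pos; lra. }
  assert (E1' : e1 * B = eps / 2) by (unfold e1; field; lra).
  assert (E2 : A * Rabs (g x - g t) <= A * e2) by (apply Rmult_le_compat_l; lra).
  assert (E2' : A * e2 < eps / 2).
  { assert (e2 <= eps / (2 * (A + 1))) by apply Rmin_r.
    apply Rle_lt_trans with (A * (eps / (2 * (A + 1)))). apply Rmult_le_compat_l; lra.
    apply Rmult_lt_reg_r with (2 * (A + 1)). lra. field_simplify; lra. }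
  fold A. lra. Qed.

Lemma cnt_sumR k (g : nat -> R -> R) t : (forall i, (i < k)%nat -> cnt (g i) t) ->
  cnt (fun x => sumR k (fun i => g i x)) t.
Proof. induction k; intros H; simpl.
  - apply cnt_const.
  - apply (cnt_plus (fun x => sumR k (fun i => g i x)) (g k)). apply IHk; intros; apply H; lia.
    apply H; lia. Qed.

Lemma dif_const c t : dif (fun _ => c) 0 t.
Proof. intros eps He. apply filter_forall. intros x. replace (c - c - 0 * (x - t)) with 0 by ring.
  rewrite Rabs_R0. pose proof (Rabs_pos (x - t)). nra. Qed.

Lemma dif_plus f g df dg t : dif f df t -> dif g dg t -> dif (fun x => f x + g x) (df + dg) t.
Proof. intros Hf Hg eps He. eapply filter_imp; [|apply filter_and; [apply (Hf (eps/2))|apply (Hg (eps/2))]]; try lra.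
  intros x [H1 H2]. replace (f x + g x - (f t + g t) - (df + dg) * (x - t)) with
    ((f x - f t - df * (x - t)) + (g x - g t - dg * (x - t))) by ring.
  eapply Rle_trans; [apply Rabs_triang|lra]. Qed.

Lemma dif_mult f g df dg t : dif f df t -> dif g dg t ->
  dif (fun x => f x * g x) (df * g t + f t * dg) t.
Proof. intros Hf Hg eps He.
  assert (Hgc := dif_cnt _ _ _ Hg).
  set (A := Rabs (f t)). set (B := Rabs (g t) + 1). set (C := Rabs df).
  assert (HA : 0 <= A) by apply Rabs_pos. assert (HC : 0 <= C) by apply Rabs_pos.
  assert (HB : 1 <= B) by (pose proof (Rabs_pos (g t)); unfold B; lra).
  set (e1 := eps / (3 * B)). set (e2 := Rmin 1 (eps / (3 * (C + 1)))). set (e3 := eps / (3 * (A + 1))).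
  assert (He1 : 0 < e1) by (unfold e1; apply Rdiv_lt_0_compat; lra).
  assert (He2 : 0 < e2) by (unfold e2; apply Rmin_pos; [lra|apply Rdiv_lt_0_compat; lra]).
  assert (He3 : 0 < e3) by (unfold e3; apply Rdiv_lt_0_compat; lra).
  eapply filter_imp; [|apply filter_and; [apply (Hf e1 He1)|apply filter_and; [apply (Hgc e2 He2)|apply (Hg e3 He3)]]].
  intros x [H1 [H2 H3]].
  replace (f x * g x - f t * g t - (df * g t + f t * dg) * (x - t)) with
    ((f x - f t - df * (x - t)) * g x + df * (x - t) * (g x - g t) + f t * (g x - g t - dg * (x - t))) by ring.
  eapply Rle_trans; [apply Rabs_triang|]. eapply Rle_trans; [apply Rplus_le_compat_r; apply Rabs_triang|].
  rewrite !Rabs_mult. fold A C.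
  assert (HX : 0 <= Rabs (x - t)) by apply Rabs_pos.
  assert (Hgx : Rabs (g x) <= B).
  { unfold B. assert (Rabs (g x) <= Rabs (g x - g t) + Rabs (g t)).
    { replace (g x) with ((g x - g t) + g t) at 1 by ring. apply Rabs_triang. }
    assert (e2 <= 1) by apply Rmin_l. lra. }
  assert (E1 : Rabs (f x - f t - df * (x - t)) * Rabs (g x) <= e1 * (Rabs (x - t)) * B).
  { apply Rmult_le_compat; try apply Rabs_pos; lra. }
  assert (E1' : e1 * B = eps / 3) by (unfold e1; field; lra).
  assert (E2 : C * (Rabs (x - t)) * Rabs (g x - g t) <= C * (Rabs (x - t)) * e2).
  { apply Rmult_le_compat_l; [nra|lra]. }
  assert (E2' : C * e2 <= eps / 3).
  { assert (e2 <= eps / (3 * (C + 1))) by apply Rmin_r.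
    apply Rle_trans with (C * (eps / (3 * (C + 1)))). apply Rmult_le_compat_l; lra.
    apply Rmult_le_reg_r with (3 * (C + 1)). lra. field_simplify; nra. }
  assert (E3 : A * Rabs (g x - g t - dg * (x - t)) <= A * (e3 * (Rabs (x - t)))).
  { apply Rmult_le_compat_l; lra. }
  assert (E3' : A * e3 <= eps / 3).
  { unfold e3. apply Rmult_le_reg_r with (3 * (A + 1)). lra. field_simplify; nra. }
  assert (e1 * (Rabs (x - t)) * B = eps / 3 * (Rabs (x - t))) by (rewrite <- E1'; ring).
  assert (C * (Rabs (x - t)) * e2 <= eps / 3 * (Rabs (x - t))) by nra.
  assert (A * (e3 * (Rabs (x - t))) <= eps / 3 * (Rabs (x - t))) by nra.
  lra. Qed.

Lemma dif_sumR k (g : nat -> R -> R) (dg : nat -> R) t : (forall i, (i < k)%nat -> dif (g i) (dg i) t) ->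
  dif (fun x => sumR k (fun i => g i x)) (sumR k dg) t.
Proof. induction k; intros H; simpl.
  - apply dif_const.
  - apply (dif_plus (fun x => sumR k (fun i => g i x)) (g k)). apply IHk; intros; apply H; lia.
    apply H; lia. Qed.

Lemma sgn_pos x : 0 < x -> sgn x = 1.
Proof. intros H. unfold sgn. destruct (Rlt_dec 0 x); [auto|lra]. Qed.
Lemma sgn_neg x : x < 0 -> sgn x = -1.
Proof. intros H. unfold sgn. destruct (Rlt_dec 0 x); [lra|]. destruct (Rlt_dec x 0); [auto|lra]. Qed.
Lemma sgn_bnd x : -1 <= sgn x <= 1.
Proof. unfold sgn. destruct (Rlt_dec 0 x); [lra|]. destruct (Rlt_dec x 0); lra. Qed.
Lemma sgn_mul x : sgn x * x = Rabs x.
Proof. unfold sgn. destruct (Rlt_dec 0 x). rewrite Rabs_right; lra.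
  destruct (Rlt_dec x 0). rewrite Rabs_left; lra. assert (x = 0) by lra. subst. rewrite Rabs_R0; ring. Qed.
Lemma sgn_mul_ge x y : sgn x * y >= - Rabs y.
Proof. pose proof (sgn_bnd x). destruct (Rle_dec 0 y). rewrite Rabs_right; nra.
  rewrite Rabs_left; nra. Qed.

Definition kap a b := if Rlt_dec 0 a then b else if Rlt_dec a 0 then -b else Rabs b.

Lemma K1 e de t : 0 <= t -> dif e (de t) t -> cnt de t -> forall eps, 0 < eps ->
  at_right t (fun x => sgn (e x) * de x >= kap (e t) (de t) - eps).
Proof. intros Ht HE HD eps He. assert (HC := dif_cnt _ _ _ HE). unfold kap.
  destruct (Rlt_dec 0 (e t)) as [Ha|Ha].
  - apply Ft_right; auto. eapply filter_imp; [|apply filter_and; [apply (HC (e t) Ha)|apply (HD eps He)]].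
    intros x [H1 H2]. apply Rabs_def2 in H1. apply Rabs_def2 in H2. rewrite sgn_pos; lra.
  - destruct (Rlt_dec (e t) 0) as [Hb|Hb].
    + apply Ft_right; auto. eapply filter_imp; [|apply filter_and; [apply (HC (- e t) ltac:(lra))|apply (HD eps He)]].
      intros x [H1 H2]. apply Rabs_def2 in H1. apply Rabs_def2 in H2. rewrite sgn_neg; lra.
    + assert (Ez : e t = 0) by lra.
      destruct (Rlt_dec 0 (de t)) as [Hc|Hc].
      * eapply filter_imp; [|apply filter_and; [apply at_right_gt|apply Ft_right; auto; apply filter_and; [apply (HE (de t / 2) ltac:(lra))|apply (HD eps He)]]].
        intros x [H0 [H1 H2]]. rewrite (Rabs_right (x - t)) in H1 by lra. apply Rabs_def2 in H2.
        rewrite Rabs_right by lra.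
        assert (Hx : 0 < e x).
        { rewrite Rabs_le_between in H1. rewrite Ez in H1. nra. }
        rewrite sgn_pos; lra.
      * destruct (Rlt_dec (de t) 0) as [Hd|Hd].
        { eapply filter_imp; [|apply filter_and; [apply at_right_gt|apply Ft_right; auto; apply filter_and; [apply (HE (- de t / 2) ltac:(lra))|apply (HD eps He)]]].
          intros x [H0 [H1 H2]]. rewrite (Rabs_right (x - t)) in H1 by lra. apply Rabs_def2 in H2.
          rewrite Rabs_left by lra.
          assert (Hx : e x < 0).
          { rewrite Rabs_le_between in H1. rewrite Ez in H1. nra. }
          rewrite sgn_neg; lra. }
        assert (Ed : de t = 0) by lra. rewrite Ed, Rabs_R0.
        apply Ft_right; auto. eapply filter_imp; [|apply (HD eps He)].
        intros x H2. rewrite Ed in H2. replace (de x - 0) with (de x) in H2 by ring.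
        pose proof (sgn_mul_ge (e x) (de x)). lra. Qed.

Lemma K2 e de t : 0 <= t -> dif e (de t) t -> forall eps, 0 < eps ->
  at_right t (fun x => Rabs (e x) - Rabs (e t) <= (kap (e t) (de t) + eps) * (x - t)).
Proof. intros Ht HE eps He. assert (HC := dif_cnt _ _ _ HE). unfold kap.
  destruct (Rlt_dec 0 (e t)) as [Ha|Ha].
  - eapply filter_imp; [|apply filter_and; [apply at_right_gt|apply Ft_right; auto; apply filter_and; [apply (HC (e t) Ha)|apply (HE eps He)]]].
    intros x [H0 [H1 H2]]. apply Rabs_def2 in H1. rewrite (Rabs_right (x - t)) in H2 by lra.
    rewrite Rabs_le_between in H2. rewrite (Rabs_right (e x)) by lra. rewrite (Rabs_right (e t)) by lra. nra.
  - destruct (Rlt_dec (e t) 0) as [Hb|Hb].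
    + eapply filter_imp; [|apply filter_and; [apply at_right_gt|apply Ft_right; auto; apply filter_and; [apply (HC (- e t) ltac:(lra))|apply (HE eps He)]]].
      intros x [H0 [H1 H2]]. apply Rabs_def2 in H1. rewrite (Rabs_right (x - t)) in H2 by lra.
      rewrite Rabs_le_between in H2. rewrite (Rabs_left (e x)) by lra. rewrite (Rabs_left (e t)) by lra. nra.
    + assert (Ez : e t = 0) by lra.
      eapply filter_imp; [|apply filter_and; [apply at_right_gt|apply Ft_right; auto; apply (HE eps He)]].
      intros x [H0 H2]. rewrite (Rabs_right (x - t)) in H2 by lra. rewrite Ez in *. rewrite Rabs_R0.
      assert (Rabs (e x) <= Rabs (e x - 0 - de t * (x - t)) + Rabs (de t * (x - t))).
      { replace (e x) with ((e x - 0 - de t * (x - t)) + de t * (x - t)) at 1 by ring. apply Rabs_triang. }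
      rewrite Rabs_mult, (Rabs_right (x - t)) in H by lra. lra. Qed.

Definition F1 (al be : R) (e e' N M Q : R -> R) (x : R) :=
  - ((e' x + al * e x) * (N x - be * sgn (e x))) - M x * e' x - Q x * e x.
Definition P1 (be : R) (e N M : R -> R) (x : R) := be * Rabs (e x) - e x * (N x + M x).

Lemma prod_ge a b : a * b >= - (Rabs a * Rabs b).
Proof. rewrite <- Rabs_mult. pose proof (Rle_abs (- (a * b))). rewrite Rabs_Ropp in H. lra. Qed.

Lemma prod_le a b : a * b <= Rabs a * Rabs b.
Proof. rewrite <- Rabs_mult. apply Rle_abs. Qed.

Lemma scal_right al be e e' N M Q dN dM t : 0 < al -> 0 < be -> 0 <= t ->
  dif e (e' t) t -> cnt e' t -> dif N dN t -> dif M dM t -> cnt Q t ->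
  Rabs (- al * N t - Q t + dN + dM) <= al * be ->
  exists L, forall eps, 0 < eps -> at_right t (fun x =>
    F1 al be e e' N M Q x >= L - eps /\
    P1 be e N M x - P1 be e N M t <= (L + eps) * (x - t)).
Proof. intros Hal Hbe Ht He He' HN HM HQ Hbd.
  set (C := fun x => - ((e' x + al * e x) * N x) - M x * e' x - Q x * e x).
  assert (HeC := dif_cnt _ _ _ He). assert (HNC := dif_cnt _ _ _ HN). assert (HMC := dif_cnt _ _ _ HM).
  assert (HC : cnt C t).
  { unfold C. apply cnt_minus; [apply cnt_minus|]; try apply cnt_mult; auto.
    apply cnt_opp. apply cnt_mult; auto. apply cnt_plus; auto. apply cnt_mult; auto. apply cnt_const. }
  set (k := kap (e t) (e' t)).
  exists (C t + be * (k + al * Rabs (e t))).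
  intros eps Heps.
  assert (HQf := dif_mult e (fun x => N x + M x) (e' t) (dN + dM) t He (dif_plus _ _ _ _ _ HN HM)).
  simpl in HQf.
  assert (Hea := cnt_abs _ _ HeC).
  eapply filter_imp; [|apply filter_and; [apply at_right_gt|apply filter_and;
     [apply (K1 e e' t Ht He He' (eps / (3 * be)))|apply filter_and;
     [apply (K2 e e' t Ht He (eps / (2 * be)))|apply Ft_right; auto; apply filter_and;
     [apply (HC (eps / 3))|apply filter_and; [apply (Hea (eps / (3 * (al * be))))|apply (HQf (eps / 2))]]]]]].
  2-6: try apply Rdiv_lt_0_compat; try lra; nra.
  intros x [H0 [H1 [H2 [H3 [H4 H5]]]]]. fold k in H1, H2.
  rewrite (Rabs_right (x - t)) in H5 by lra.
  apply Rabs_def2 in H3. apply Rabs_def2 in H4.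
  rewrite Rabs_le_between in H5.
  split.
  - unfold F1.
    replace (- ((e' x + al * e x) * (N x - be * sgn (e x))) - M x * e' x - Q x * e x) with
      (C x + be * (sgn (e x) * e' x) + al * be * (sgn (e x) * e x)) by (unfold C; ring).
    rewrite sgn_mul.
    assert (be * (sgn (e x) * e' x) >= be * k - eps / 3).
    { replace (eps / 3) with (be * (eps / (3 * be))) by (field; lra). nra. }
    assert (al * be * Rabs (e x) >= al * be * Rabs (e t) - eps / 3).
    { replace (eps / 3) with (al * be * (eps / (3 * (al * be)))) by (field; lra).
      assert (0 < al * be) by nra. nra. }
    lra.
  - unfold P1.
    assert (Hk : be * (Rabs (e x) - Rabs (e t)) <= (be * k + eps / 2) * (x - t)).
    { replace (be * k + eps / 2) with (be * (k + eps / (2 * be))) by (field; lra).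
      rewrite Rmult_assoc. apply Rmult_le_compat_l; lra. }
    assert (Hpos : 0 <= C t + be * al * Rabs (e t) + (e' t * (N t + M t) + e t * (dN + dM))).
    { replace (C t + be * al * Rabs (e t) + (e' t * (N t + M t) + e t * (dN + dM))) with
        (al * be * Rabs (e t) + e t * (- al * N t - Q t + dN + dM)) by (unfold C; ring).
      pose proof (prod_ge (e t) (- al * N t - Q t + dN + dM)). pose proof (Rabs_pos (e t)).
      assert (Rabs (e t) * Rabs (- al * N t - Q t + dN + dM) <= Rabs (e t) * (al * be)) by
        (apply Rmult_le_compat_l; lra). nra. }
    nra. Qed.

Lemma scal_left al be e e' N M Q t : 0 < be -> cnt e t -> cnt e' t -> cnt N t -> cnt M t -> cnt Q t ->
  exists B, Ft t (fun x => F1 al be e e' N M Q x >= B).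
Proof. intros Hbe He He' HN HM HQ.
  set (l := fun x => - (Rabs (e' x + al * e x) * (Rabs (N x) + be)) - Rabs (M x) * Rabs (e' x) - Rabs (Q x) * Rabs (e x)).
  assert (Hl : cnt l t).
  { unfold l. repeat first [apply cnt_minus | apply cnt_opp | apply cnt_mult | apply cnt_abs | apply cnt_plus | apply cnt_const | assumption]. }
  exists (l t - 1). eapply filter_imp; [|apply (Hl 1 Rlt_0_1)].
  intros x Hx. apply Rabs_def2 in Hx.
  assert (F1 al be e e' N M Q x >= l x); [|lra].
  unfold F1, l.
  pose proof (prod_le (e' x + al * e x) (N x - be * sgn (e x))).
  pose proof (prod_le (M x) (e' x)). pose proof (prod_le (Q x) (e x)).
  assert (Rabs (N x - be * sgn (e x)) <= Rabs (N x) + be).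
  { eapply Rle_trans; [apply Rabs_triang|]. rewrite Rabs_Ropp, Rabs_mult, (Rabs_right be) by lra.
    pose proof (sgn_bnd (e x)). assert (Rabs (sgn (e x)) <= 1) by (apply Rabs_le; lra). nra. }
  pose proof (Rabs_pos (e' x + al * e x)). nra. Qed.

Lemma scal_P1_cnt be e N M t : cnt e t -> cnt N t -> cnt M t -> cnt (P1 be e N M) t.
Proof. intros. unfold P1.
  repeat first [apply cnt_minus | apply cnt_opp | apply cnt_mult | apply cnt_abs | apply cnt_plus | apply cnt_const | assumption]. Qed.

Lemma sum_right k (fi Pi : nat -> R -> R) t :
  (forall i, (i < k)%nat -> exists L, forall eps, 0 < eps -> at_right t (fun x =>
     fi i x >= L - eps /\ Pi i x - Pi i t <= (L + eps) * (x - t))) ->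
  exists L, forall eps, 0 < eps -> at_right t (fun x =>
     sumR k (fun i => fi i x) >= L - eps /\
     sumR k (fun i => Pi i x) - sumR k (fun i => Pi i t) <= (L + eps) * (x - t)).
Proof. induction k; intros H.
  - exists 0. intros eps He. eapply filter_imp; [|apply at_right_gt]. intros x Hx. simpl. nra.
  - destruct IHk as [L1 H1]. intros; apply H; lia.
    destruct (H k ltac:(lia)) as [L2 H2].
    exists (L1 + L2). intros eps He.
    eapply filter_imp; [|apply filter_and; [apply (H1 (eps/2))|apply (H2 (eps/2))]]; try lra.
    intros x [[A1 A2] [B1 B2]]. simpl. split; nra. Qed.

Lemma sum_left k (fi : nat -> R -> R) t :
  (forall i, (i < k)%nat -> exists B, Ft t (fun x => fi i x >= B)) ->
  exists B, Ft t (fun x => sumR k (fun i => fi i x) >= B).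
Proof. induction k; intros H.
  - exists 0. apply filter_forall. intros; simpl; lra.
  - destruct IHk as [L1 H1]. intros; apply H; lia.
    destruct (H k ltac:(lia)) as [L2 H2].
    exists (L1 + L2). eapply filter_imp; [|apply filter_and; [apply H1|apply H2]].
    intros x [A B]. simpl. lra. Qed.

Lemma sumR_nonneg k f : (forall i, (i < k)%nat -> 0 <= f i) -> 0 <= sumR k f.
Proof. induction k; intros H; simpl. lra. assert (0 <= sumR k f) by (apply IHk; intros; apply H; lia).
  assert (0 <= f k) by (apply H; lia). lra. Qed.

Lemma sumR_ext k f g : (forall i, (i < k)%nat -> f i = g i) -> sumR k f = sumR k g.
Proof. induction k; intros H; simpl. auto. rewrite IHk by (intros; apply H; lia). rewrite H by lia. auto. Qed.

Lemma sumR_lin k a b c : - sumR k a - sumR k b - sumR k c = sumR k (fun i => - a i - b i - c i).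
Proof. induction k; simpl. ring. rewrite <- IHk. ring. Qed.

Lemma sumR_lin2 be k a b : be * sumR k a - sumR k b = sumR k (fun i => be * a i - b i).
Proof. induction k; simpl. ring. rewrite <- IHk. ring. Qed.

Lemma le_norm1 k x i : (i < k)%nat -> Rabs (x i) <= norm1 k x.
Proof. unfold norm1. induction k; intros H; simpl. lia.
  assert (0 <= sumR k (fun i => Rabs (x i))) by (apply sumR_nonneg; intros; apply Rabs_pos).
  destruct (Nat.eq_dec i k). subst. lra. assert (Rabs (x i) <= sumR k (fun i => Rabs (x i))) by (apply IHk; lia).
  pose proof (Rabs_pos (x k)). lra. Qed.

Lemma le_sq k x i : (i < k)%nat -> x i * x i <= sumR k (fun j => x j * x j).
Proof. induction k; intros H; simpl. lia.
  assert (0 <= sumR k (fun j => x j * x j)) by (apply sumR_nonneg; intros; nra).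
  destruct (Nat.eq_dec i k). subst. lra. assert (x i * x i <= sumR k (fun j => x j * x j)) by (apply IHk; lia).
  nra. Qed.

Lemma le_norm2 k x i : (i < k)%nat -> Rabs (x i) <= norm2 k x.
Proof. intros H. unfold norm2, dotR. rewrite <- sqrt_Rsqr_abs. apply sqrt_le_1_alt.
  unfold Rsqr. now apply le_sq. Qed.

Lemma mono (g : R -> R) T : 0 <= T ->
  (forall t, 0 <= t -> forall eps, 0 < eps -> exists d, 0 < d /\ forall u, t < u < t + d -> g u >= g t - eps * (u - t)) ->
  (forall t, 0 < t -> forall eps, 0 < eps -> exists d, 0 < d /\ forall u, t - d < u < t -> g t >= g u - eps) ->
  g T >= g 0.
Proof. intros HT HR HL. apply Rnot_lt_ge; intro Hlt.
  set (ep := (g 0 - g T) / (2 * (T + 1))).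
  assert (Hep : 0 < ep) by (unfold ep; apply Rdiv_lt_0_compat; lra).
  set (h := fun u => g u + ep * u).
  set (E := fun x => 0 <= x <= T /\ forall y, 0 <= y <= x -> h y >= h 0).
  assert (HE0 : E 0). { split. lra. intros y Hy. replace y with 0 by lra. lra. }
  assert (Hb : bound E). { exists T. intros x Hx. apply Hx. }
  destruct (completeness E Hb (ex_intro _ 0 HE0)) as [c [Hc1 Hc2]].
  assert (Hc0 : 0 <= c) by (apply Hc1; auto).
  assert (HcT : c <= T) by (apply Hc2; intros x Hx; apply Hx).
  assert (HA : forall y, 0 <= y < c -> h y >= h 0).
  { intros y Hy. destruct (classic (exists x, E x /\ y < x)) as [[x [Hx1 Hx2]]|Hn].
    - apply Hx1. lra.
    - exfalso. assert (c <= y).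
      { apply Hc2. intros x Hx. apply Rnot_lt_le. intro. apply Hn. exists x; auto. }
      lra. }
  assert (HB : h c >= h 0).
  { destruct (Req_dec c 0) as [->|Hc]. lra.
    apply Rnot_lt_ge; intro Hlt2.
    destruct (HL c ltac:(lra) ((h 0 - h c) / 2) ltac:(lra)) as [d [Hd Hd2]].
    set (u := c - Rmin d c / 2).
    assert (Hm1 := Rmin_l d c). assert (Hm2 := Rmin_r d c). assert (Hm0 : 0 < Rmin d c) by (apply Rmin_pos; lra).
    specialize (Hd2 u ltac:(unfold u; lra)). assert (Hu := HA u ltac:(unfold u; lra)).
    unfold h in *. assert (ep * u <= ep * c) by (apply Rmult_le_compat_l; unfold u; lra). lra. }
  assert (HEc : E c).
  { split. lra. intros y Hy. destruct (Req_dec y c) as [->|]. auto. apply HA. lra. }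
  assert (HcT' : c = T).
  { destruct (Req_dec c T) as [|Hne]; auto. exfalso.
    destruct (HR c Hc0 ep Hep) as [d [Hd Hd2]].
    set (u := c + Rmin d (T - c) / 2).
    assert (Hm1 := Rmin_l d (T - c)). assert (Hm2 := Rmin_r d (T - c)).
    assert (Hm0 : 0 < Rmin d (T - c)) by (apply Rmin_pos; lra).
    assert (E u).
    { split. unfold u; lra. intros y Hy. destruct (Rle_dec y c). apply HEc; lra.
      specialize (Hd2 y ltac:(unfold u in Hy; lra)). unfold h in *. nra. }
    assert (u <= c) by (apply Hc1; auto). unfold u in *. lra. }
  subst c. destruct HEc as [_ HEc]. specialize (HEc T ltac:(lra)). unfold h in HEc.
  assert (ep * T < g 0 - g T).
  { unfold ep. apply Rlt_le_trans with ((g 0 - g T) / 2 * 1).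
    - unfold Rdiv. rewrite Rinv_mult. assert (0 < / (T + 1)) by (apply Rinv_0_lt_compat; lra).
      assert (T * / (T + 1) < 1). { apply Rmult_lt_reg_r with (T + 1). lra. rewrite Rmult_assoc, Rinv_l by lra. lra. }
      nra.
    - lra. }
  lra. Qed.

Lemma int_lb f a b I m : a < b -> is_RInt f a b I -> (forall x, a < x < b -> f x >= m) -> I >= m * (b - a).
Proof. intros Hab HI Hf. assert (H := is_RInt_le (fun _ => m) f a b (scal (b - a) m) I ltac:(lra) (is_RInt_const a b m) HI).
  change (scal (b - a) m) with ((b - a) * m) in H. apply Rle_ge. rewrite Rmult_comm. apply H. intros x Hx. apply Rge_le, Hf; auto. Qed.

Lemma int_tu f Om t u : (forall t, 0 <= t -> is_RInt f 0 t (Om t - Om 0)) -> 0 <= t < u -> is_RInt f t u (Om u - Om t).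
Proof. intros H Htu. destruct (Req_dec t 0) as [->|Ht]. apply H; lra.
  assert (H2 := is_RInt_Chasles_2 f 0 t u (Om u - Om 0) (Om t - Om 0) ltac:(lra) (H u ltac:(lra)) (H t ltac:(lra))).
  replace (Om u - Om t) with (minus (Om u - Om 0) (Om t - Om 0)). exact H2.
  unfold minus, plus, opp; simpl. ring. Qed.

Lemma assembly (f P Om : R -> R) : (forall t, 0 <= t -> is_RInt f 0 t (Om t - Om 0)) -> Om 0 = P 0 ->
  (forall t, 0 <= t -> P t >= 0) ->
  (forall t, 0 <= t -> exists L, forall eps, 0 < eps -> at_right t (fun x => f x >= L - eps /\ P x - P t <= (L + eps) * (x - t))) ->
  (forall t, 0 < t -> exists B, Ft t (fun x => f x >= B)) -> (forall t, 0 < t -> cnt P t) ->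
  forall t, 0 <= t -> Om t >= 0.
Proof. intros HI H0 HP HR HL HC T HT.
  assert (Hm := mono (fun x => Om x - P x) T HT). simpl in Hm.
  assert (Om T - P T >= Om 0 - P 0); [|specialize (HP T HT); lra].
  apply Hm.
  - intros t Ht eps He. destruct (HR t Ht) as [L HL2]. destruct (HL2 (eps / 2) ltac:(lra)) as [d Hd].
    exists d. split. apply cond_pos. intros u Hu.
    assert (Hint := int_tu f Om t u HI ltac:(lra)).
    assert (Hball : forall y, t < y < t + d -> ball t d y).
    { intros y Hy. apply ballR. apply Rabs_def1; lra. }
    assert (Hlb := int_lb f t u _ (L - eps / 2) ltac:(lra) Hint).
    assert (Om u - Om t >= (L - eps / 2) * (u - t)).
    { apply Hlb. intros x Hx. apply (Hd x); [apply Hball; lra|lra]. }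
    destruct (Hd u ltac:(apply Hball; lra) ltac:(lra)) as [_ Hp]. nra.
  - intros t Ht eps He. destruct (HL t Ht) as [B HB]. apply Ft_left in HB; auto.
    destruct HB as [d1 Hd1]. destruct (HC t Ht (eps / 2) ltac:(lra)) as [d2 Hd2].
    set (d3 := eps / (2 * (Rabs B + 1))). assert (Hd3 : 0 < d3) by (unfold d3; apply Rdiv_lt_0_compat; pose proof (Rabs_pos B); lra).
    exists (Rmin d1 (Rmin d2 d3)). split. apply Rmin_pos. apply cond_pos. apply Rmin_pos. apply cond_pos. auto.
    intros u Hu. assert (Hm1 := Rmin_l d1 (Rmin d2 d3)). assert (Hm2 := Rmin_r d1 (Rmin d2 d3)).
    assert (Hm3 := Rmin_l d2 d3). assert (Hm4 := Rmin_r d2 d3).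
    assert (Hball : forall (e : posreal) y, t - e < y < t -> ball t e y).
    { intros e y Hy. apply ballR. apply Rabs_def1; lra. }
    destruct (Hd1 u ltac:(apply Hball; lra) ltac:(lra)) as [Hu0 _].
    assert (Hint := int_tu f Om u t HI ltac:(lra)).
    assert (Hlb := int_lb f u t _ B ltac:(lra) Hint).
    assert (Om t - Om u >= B * (t - u)).
    { apply Hlb. intros x Hx. apply (Hd1 x); [apply Hball; lra|lra]. }
    assert (Hpu := Hd2 u ltac:(apply Hball; lra) Hu0). apply Rabs_def2 in Hpu.
    assert (B * (t - u) >= - (eps / 2)).
    { assert (t - u < d3) by lra. assert ((Rabs B + 1) * (t - u) <= eps / 2).
      { apply Rle_trans with ((Rabs B + 1) * d3). apply Rmult_le_compat_l; [pose proof (Rabs_pos B)|]; lra.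
        unfold d3. right. field. pose proof (Rabs_pos B); lra. }
      pose proof (Rle_abs (- B)) as HB2. rewrite Rabs_Ropp in HB2. nra. }
    lra. Qed.

Lemma cnt_ext f g t : (forall x, f x = g x) -> cnt g t -> cnt f t.
Proof. intros H Hg eps He. eapply filter_imp; [|apply (Hg eps He)]. intros x. rewrite !H. auto. Qed.

Lemma bnd6 al a b q c d m : 0 < al ->
  Rabs (- al * (a + b) - q + (c + d) + m) <= al * (Rabs a + Rabs b) + Rabs q + Rabs c + Rabs d + Rabs m.
Proof. intros Hal.
  pose proof (Rle_abs a). pose proof (Rle_abs b). pose proof (Rle_abs q). pose proof (Rle_abs c).
  pose proof (Rle_abs d). pose proof (Rle_abs m).
  pose proof (Rle_abs (-a)). pose proof (Rle_abs (-b)). pose proof (Rle_abs (-q)). pose proof (Rle_abs (-c)).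
  pose proof (Rle_abs (-d)). pose proof (Rle_abs (-m)). rewrite !Rabs_Ropp in *.
  apply Rabs_le. split; nra. Qed.

Theorem lemma1
  (n lz lc : nat) (Hn : (1 <= n)%nat) (Hlz : (1 <= lz)%nat) (Hlc : (1 <= lc)%nat)
  (alpha beta_d : R) (Halpha : 0 < alpha) (Hbeta : 0 < beta_d)
  (* e with derivative e' *)
  (e e' : R -> nat -> R)
  (* delta_3 with first and second derivatives *)
  (d3 d3' d3'' : R -> nat -> R)
  (* D with first and second derivatives *)
  (D D' D'' : R -> nat -> R)
  (* tilde z_j, w_j and their derivatives, j = 0 .. lz-1 *)
  (zt zt' : nat -> R -> R) (w w' : nat -> R -> nat -> R)
  (* Lambda_j, v in R^lc and tilde w_j in R^n *)
  (Lam : nat -> R -> nat -> R) (v : R -> nat -> R) (wt : nat -> R -> nat -> R)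
  (He : vC1_on0 n e e')
  (Hd3 : vC1_on0 n d3 d3') (Hd3' : vC1_on0 n d3' d3'')
  (HD : vC1_on0 n D D') (HD' : vC1_on0 n D' D'')
  (Hz : forall j, (j < lz)%nat -> C1_on0 (zt j) (zt' j))
  (Hw : forall j, (j < lz)%nat -> vC1_on0 n (w j) (w' j))
  (HLam : forall j, (j < lz)%nat -> vcont_on0 lc (Lam j))
  (Hv : vcont_on0 lc v)
  (Hwt : forall j, (j < lz)%nat -> vcont_on0 n (wt j))
  (bd3' bd3'' cd1 cd2 cM1 cM1' cM2 : R)
  (Hpos : 0 < bd3' /\ 0 < bd3'' /\ 0 < cd1 /\ 0 < cd2 /\ 0 < cM1 /\ 0 < cM1' /\ 0 < cM2) :
  let s := fun t i => e' t i + alpha * e t i in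
  let M1 := fun t i => sumR lz (fun j => zt j t * w j t i) in
  (* M1' is the time derivative of M1 (product rule) *)
  let M1' := fun t i => sumR lz (fun j => zt' j t * w j t i + zt j t * w' j t i) in
  let M2 := fun t i => sumR lz (fun j => dotR lc (Lam j t) (v t) * wt j t i) in
  (forall t, 0 <= t ->
     norm1 n (d3' t) < bd3' /\ norm1 n (d3'' t) < bd3'' /\
     norm2 n (D' t) <= cd1 /\ norm2 n (D'' t) <= cd2 /\
     norm1 n (M1 t) < cM1 /\ norm1 n (M1' t) < cM1' /\ norm1 n (M2 t) < cM2) ->
  forall Omega : R -> R,
  Omega 0 = beta_d * norm1 n (e 0)
            - dotR n (e 0) (fun i => d3' 0 i + D' 0 i + M1 0 i) ->
  (forall t, 0 <= t ->
     is_RInt (fun tau =>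
         - dotR n (s tau) (fun i => d3' tau i + D' tau i - beta_d * sgn (e tau i))
         - dotR n (M1 tau) (e' tau)
         - dotR n (M2 tau) (e tau))
       0 t (Omega t - Omega 0)) ->
  beta_d >= bd3' + cd1 + cM1 + / alpha * (bd3'' + cd2 + cM1' + cM2) ->
  forall t, 0 <= t -> Omega t >= 0.
Proof.
  intros s M1 M1' M2 Hb Omega HO0 HInt Hbd.
  set (F := fun tau : R => - dotR n (s tau) (fun i => d3' tau i + D' tau i - beta_d * sgn (e tau i))
         - dotR n (M1 tau) (e' tau) - dotR n (M2 tau) (e tau)) in HInt.
  set (P := fun x => beta_d * norm1 n (e x) - dotR n (e x) (fun i => d3' x i + D' x i + M1 x i)).
  set (ei := fun i y => e y i). set (ei' := fun i y => e' y i).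
  set (Ni := fun i y => d3' y i + D' y i). set (Mi := fun i y => M1 y i). set (Qi := fun i y => M2 y i).
  assert (HF : forall x, F x = sumR n (fun i => F1 alpha beta_d (ei i) (ei' i) (Ni i) (Mi i) (Qi i) x)).
  { intros x. unfold F, dotR. rewrite sumR_lin. apply sumR_ext. intros i Hi.
    unfold F1, s, ei, ei', Ni, Mi, Qi. ring. }
  assert (HP : forall x, P x = sumR n (fun i => P1 beta_d (ei i) (Ni i) (Mi i) x)).
  { intros x. unfold P, norm1, dotR. rewrite sumR_lin2. apply sumR_ext. intros i Hi.
    unfold P1, ei, Ni, Mi. ring. }
  destruct Hpos as [P1p [P2p [P3p [P4p [P5p [P6p P7p]]]]]].
  set (K := bd3'' + cd2 + cM1' + cM2).
  assert (HK : alpha * beta_d >= alpha * (bd3' + cd1 + cM1) + K).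
  { assert (alpha * (/ alpha * K) = K) by (field; lra). fold K in Hbd. nra. }
  assert (HbX : bd3' + cd1 + cM1 <= beta_d).
  { assert (0 < / alpha * K) by (apply Rmult_lt_0_compat; [apply Rinv_0_lt_compat|unfold K]; lra). fold K in Hbd. lra. }
  assert (Rdif_e : forall i t, (i < n)%nat -> 0 <= t -> dif (ei i) (ei' i t) t).
  { intros i t Hi Ht. apply (dif_of_deriv (ei i) (ei' i)); auto. apply (He i Hi). }
  assert (Rcnt_e' : forall i t, (i < n)%nat -> 0 <= t -> cnt (ei' i) t).
  { intros i t Hi Ht. apply cnt_of_cont; auto. apply (He i Hi). }
  assert (Rdif_N : forall i t, (i < n)%nat -> 0 <= t -> dif (Ni i) (d3'' t i + D'' t i) t).
  { intros i t Hi Ht. unfold Ni. apply (dif_plus (fun y => d3' y i) (fun y => D' y i)).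
    apply (dif_of_deriv (fun y => d3' y i) (fun y => d3'' y i)); auto. apply (Hd3' i Hi).
    apply (dif_of_deriv (fun y => D' y i) (fun y => D'' y i)); auto. apply (HD' i Hi). }
  assert (Rdif_M : forall i t, (i < n)%nat -> 0 <= t -> dif (Mi i) (M1' t i) t).
  { intros i t Hi Ht. unfold Mi, M1, M1'.
    apply (dif_sumR lz (fun j y => zt j y * w j y i) (fun j => zt' j t * w j t i + zt j t * w' j t i)).
    intros j Hj. apply (dif_mult (zt j) (fun y => w j y i)).
    apply (dif_of_deriv (zt j) (zt' j)); auto. apply (Hz j Hj).
    apply (dif_of_deriv (fun y => w j y i) (fun y => w' j y i)); auto. apply (Hw j Hj i Hi). }
  assert (Rcnt_Q : forall i t, (i < n)%nat -> 0 <= t -> cnt (Qi i) t).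
  { intros i t Hi Ht. unfold Qi, M2, dotR.
    apply (cnt_sumR lz (fun j y => sumR lc (fun k => Lam j y k * v y k) * wt j y i)).
    intros j Hj. apply (cnt_mult (fun y => sumR lc (fun k => Lam j y k * v y k)) (fun y => wt j y i)).
    - apply (cnt_sumR lc (fun k y => Lam j y k * v y k)). intros k Hk.
      apply (cnt_mult (fun y => Lam j y k) (fun y => v y k)); apply cnt_of_cont; auto.
      all: try apply (HLam j Hj k Hk); try apply (Hv k Hk).
    - apply cnt_of_cont; auto; try apply (Hwt j Hj i Hi). }
  apply (assembly F P Omega HInt).
  - rewrite HO0. reflexivity.
  - intros t Ht. rewrite HP. apply Rle_ge. apply sumR_nonneg. intros i Hi.
    destruct (Hb t Ht) as [B1 [B2 [B3 [B4 [B5 [B6 B7]]]]]].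
    unfold P1, ei, Ni, Mi.
    assert (Rabs (d3' t i) <= norm1 n (d3' t)) by (apply le_norm1; auto).
    assert (Rabs (D' t i) <= norm2 n (D' t)) by (apply le_norm2; auto).
    assert (Rabs (M1 t i) <= norm1 n (M1 t)) by (apply le_norm1; auto).
    assert (Rabs (d3' t i + D' t i + M1 t i) <= Rabs (d3' t i) + Rabs (D' t i) + Rabs (M1 t i)).
    { eapply Rle_trans; [apply Rabs_triang|]. pose proof (Rabs_triang (d3' t i) (D' t i)). lra. }
    pose proof (prod_le (e t i) (d3' t i + D' t i + M1 t i)). pose proof (Rabs_pos (e t i)).
    nra.
  - intros t Ht. destruct (sum_right n (fun i => F1 alpha beta_d (ei i) (ei' i) (Ni i) (Mi i) (Qi i))
        (fun i => P1 beta_d (ei i) (Ni i) (Mi i)) t) as [L HL].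
    { intros i Hi. apply (scal_right alpha beta_d (ei i) (ei' i) (Ni i) (Mi i) (Qi i) (d3'' t i + D'' t i) (M1' t i) t); auto.
      destruct (Hb t Ht) as [B1 [B2 [B3 [B4 [B5 [B6 B7]]]]]].
      unfold Ni, Qi. eapply Rle_trans; [apply bnd6; auto|].
      assert (Rabs (d3' t i) <= norm1 n (d3' t)) by (apply le_norm1; auto).
      assert (Rabs (D' t i) <= norm2 n (D' t)) by (apply le_norm2; auto).
      assert (Rabs (M2 t i) <= norm1 n (M2 t)) by (apply le_norm1; auto).
      assert (Rabs (d3'' t i) <= norm1 n (d3'' t)) by (apply le_norm1; auto).
      assert (Rabs (D'' t i) <= norm2 n (D'' t)) by (apply le_norm2; auto).
      assert (Rabs (M1' t i) <= norm1 n (M1' t)) by (apply le_norm1; auto).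
      assert (alpha * (Rabs (d3' t i) + Rabs (D' t i)) <= alpha * (bd3' + cd1)) by (apply Rmult_le_compat_l; lra).
      unfold K in HK. nra. }
    exists L. intros eps He0. eapply filter_imp; [|apply (HL eps He0)].
    intros x. rewrite HF, !HP. auto.
  - intros t Ht. destruct (sum_left n (fun i => F1 alpha beta_d (ei i) (ei' i) (Ni i) (Mi i) (Qi i)) t) as [B HB].
    { intros i Hi. apply scal_left; auto.
      apply (dif_cnt _ _ _ (Rdif_e i t Hi ltac:(lra))). apply Rcnt_e'; auto; lra.
      apply (dif_cnt _ _ _ (Rdif_N i t Hi ltac:(lra))). apply (dif_cnt _ _ _ (Rdif_M i t Hi ltac:(lra))).
      apply Rcnt_Q; auto; lra. }
    exists B. eapply filter_imp; [|apply HB]. intros x. rewrite HF. auto.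
  - intros t Ht. apply (cnt_ext P (fun x => sumR n (fun i => P1 beta_d (ei i) (Ni i) (Mi i) x))); auto.
    apply (cnt_sumR n (fun i => P1 beta_d (ei i) (Ni i) (Mi i))). intros i Hi. apply scal_P1_cnt.
    apply (dif_cnt _ _ _ (Rdif_e i t Hi ltac:(lra))).
    apply (dif_cnt _ _ _ (Rdif_N i t Hi ltac:(lra))). apply (dif_cnt _ _ _ (Rdif_M i t Hi ltac:(lra))).
Qed.
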